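(* Let $T=((\Omega,\mathcal{A}),\{(\Omega,\mathcal{M}_i)\}_{i\in N},\{t_i\}_{i\in N})$ be a type space. The players' beliefs in $T$ are universally consistent if and only if for every finite $I\subseteq N$ and every $I$-common certainty component $S$, the players' beliefs in the induced type space $T_S$ (with player set $I$) are consistent.
   Context: A field on a set $X$ is a collection of subsets of $X$ containing $X$ and closed under complements and finite intersections. For a field $\mathcal{A}$ on $\Omega$, $\mathrm{pba}(\Omega,\mathcal{A})$ is the set of finitely additive nonnegative $P:\mathcal{A}\to\mathbb{R}$ with $P(\Omega)=1$; $B(\Omega,\mathcal{A})$ the sup-norm closure of the linear span of indicators of sets in $\mathcal{A}$; the space of bounded finitely additive set functions carries the weak* topology (weakest making $\mu\mapsto\int f\,d\mu$ continuous for all $f\in B(\Omega,\mathcal{A})$), $\overline{\,\cdot\,}^\ast$ denotes weak* closure. A type space is $((\Omega,\mathcal{A}),\{(\Omega,\mathcal{M}_i)\}_{i\in N},\{t_i\}_{i\in N})$ with $N$ a nonempty set of players, fields $\mathcal{M}_i\subseteq\mathcal{A}$ on a set $\Omega$, and $t_i:\Omega\times\mathcal{A}\to[0,1]$ with: $t_i(\omega,\cdot)\in\mathrm{pba}(\Omega,\mathcal{A})$; $t_i(\cdot,E)\in B(\Omega,\mathcal{M}_i)$ for all $E\in\mathcal{A}$; $t_i(\omega,E)=1$ whenever $E\in\mathcal{M}_i$, $\omega\in E$. For each player $i$, $\Pi_i=\overline{\mathrm{conv}\{t_i(\omega,\cdot):\omega\in\Omega\}}^\ast$ (equivalently the $P\in\mathrm{pba}(\Omega,\mathcal{A})$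 with $P(E\cap F)=\int_F t_i(\cdot,E)\,dP$ for all $E\in\mathcal{A},F\in\mathcal{M}_i$). The players' beliefs in a type space are consistent if $\bigcap_{i\in J}\Pi_i\ne\emptyset$ for every finite set $J$ of its players. For $I\subseteq N$, a nonempty $S\subseteq\Omega$ is an $I$-common certainty component if there is $E\in\mathcal{A}$ with $E\subseteq S$ and $t_i(\omega,E)=1$ for all $\omega\in S$, $i\in I$. The induced type space is $T_S=((S,\mathcal{A}^S),\{(S,\mathcal{M}_i^S)\}_{i\in I},\{t_i^S\}_{i\in I})$ with $\mathcal{A}^S=\{F\cap S:F\in\mathcal{A}\}$, $\mathcal{M}_i^S=\{F\cap S:F\in\mathcal{M}_i\}$, $t_i^S(\omega,F\cap S)=t_i(\omega,F)$ for $\omega\in S$, $F\in\mathcal{A}$. The players' beliefs in $T$ are universally consistent if for every finite $I\subseteq N$ and every $I$-common certainty component $S$ there exists $P\in\bigcap_{i\in I}\Pi_i$ with $\inf\{P(E):E\in\mathcal{A},S\subseteq E\}>0$. *)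

(* Defs.v *)
From HB Require Import structures.
From mathcomp Require Import all_boot all_order all_algebra.
From mathcomp Require Import all_classical all_reals.
From mathcomp Require Import numfun.
From Stdlib Require Import ClassicalEpsilon.
Set Implicit Arguments. Unset Strict Implicit. Unset Printing Implicit Defensive.
Import Order.TTheory GRing.Theory Num.Theory.
Local Open Scope classical_set_scope.
Local Open Scope ring_scope.

Section TypeSpaces.
Context {R : realType}.

Definition is_field {Omega : Type} (F : set (set Omega)) : Prop :=
  F setT /\ (forall E, F E -> F (~` E)) /\
  (forall E G, F E -> F G -> F (E `&` G)).

(* Set functions are total functions set Omega -> R; only their values on
   the field A matter. *)
Definition fin_additive {Omega : Type} (A : set (set Omega)) (mu : set Omega -> R) : Prop :=
  forall E G, A E -> A G -> E `&` G = set0 -> mu (E `|` G) = mu E + mu G.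

Definition bcharge {Omega : Type} (A : set (set Omega)) (mu : set Omega -> R) : Prop :=
  fin_additive A mu /\ exists M : R, forall E, A E -> `|mu E| <= M.

Definition pba {Omega : Type} (A : set (set Omega)) (P : set Omega -> R) : Prop :=
  fin_additive A P /\ (forall E, A E -> 0 <= P E) /\ P setT = 1.

Definition simple_fun {Omega : Type} (n : nat) (c : 'I_n -> R) (E : 'I_n -> set Omega)
  : Omega -> R := fun w => \sum_(k < n) c k * \1_(E k) w.

Definition inB {Omega : Type} (A : set (set Omega)) (f : Omega -> R) : Prop :=
  forall eps : R, 0 < eps -> exists n (c : 'I_n -> R) (E : 'I_n -> set Omega),
    (forall k, A (E k)) /\ forall w, `|f w - simple_fun c E w| < eps.

Definition integral_is {Omega : Type} (A : set (set Omega)) (mu : set Omega -> R)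
  (f : Omega -> R) (L : R) : Prop :=
  forall eps : R, 0 < eps -> exists2 d : R, 0 < d &
    forall n (c : 'I_n -> R) (E : 'I_n -> set Omega), (forall k, A (E k)) ->
      (forall w, `|f w - simple_fun c E w| < d) ->
      `|\sum_(k < n) c k * mu (E k) - L| < eps.

Definition integral {Omega : Type} (A : set (set Omega)) (mu : set Omega -> R)
  (f : Omega -> R) : R :=
  epsilon (inhabits 0) (integral_is A mu f).

Definition wstar_closure {Omega : Type} (A : set (set Omega))
  (C : set (set Omega -> R)) : set (set Omega -> R) :=
  fun mu => bcharge A mu /\
    forall n (f : 'I_n -> Omega -> R), (forall k, inB A (f k)) ->
    forall eps : R, 0 < eps -> exists Q, C Q /\
      forall k, `|integral A Q (f k) - integral A mu (f k)| < eps.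

Definition conv_types {Omega N : Type} (t : N -> Omega -> set Omega -> R) (i : N)
  : set (set Omega -> R) :=
  fun Q => exists n (lam : 'I_n -> R) (ws : 'I_n -> Omega),
    (forall k, 0 <= lam k) /\ \sum_(k < n) lam k = 1 /\
    Q = (fun E => \sum_(k < n) lam k * t i (ws k) E).

Definition Pi {Omega N : Type} (A : set (set Omega)) (t : N -> Omega -> set Omega -> R)
  (i : N) : set (set Omega -> R) :=
  wstar_closure A (conv_types t i).

(* Type space with player set N (all of the type N), which is nonempty. *)
Definition type_space {Omega N : Type} (A : set (set Omega)) (M : N -> set (set Omega))
  (t : N -> Omega -> set Omega -> R) : Prop :=
  (exists i : N, True) /\ is_field A /\
  forall i : N,
    is_field (M i) /\ M i `<=` A /\
    (forall w, pba A (t i w)) /\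
    (forall E, A E -> inB (M i) (fun w => t i w E)) /\
    (forall E w, M i E -> E w -> t i w E = 1).

Definition consistent {Omega N : Type} (A : set (set Omega))
  (t : N -> Omega -> set Omega -> R) : Prop :=
  forall J : set N, finite_set J ->
    exists P, bcharge A P /\ forall i, J i -> Pi A t i P.

Definition cc_component {Omega N : Type} (A : set (set Omega))
  (t : N -> Omega -> set Omega -> R) (I : set N) (S : set Omega) : Prop :=
  S !=set0 /\ exists E, A E /\ E `<=` S /\
    forall w i, S w -> I i -> t i w E = 1.

Definition univ_consistent {Omega N : Type} (A : set (set Omega))
  (t : N -> Omega -> set Omega -> R) : Prop :=
  forall I : set N, finite_set I -> forall S, cc_component A t I S ->
    exists P, bcharge A P /\ (forall i, I i -> Pi A t i P) /\
      exists2 d : R, 0 < d & forall E, A E -> S `<=` E -> d <= P E.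

(* Induced type space T_S: carrier S (as a subtype), field A^S = {F cap S},
   players I (as a subtype), t_i^S(w, F cap S) = t_i(w, F). *)
Definition restr_fam {Omega : Type} (S : set Omega) (X : set (set Omega))
  : set (set {w : Omega | S w}) :=
  [set G | exists2 F, X F & G = (@proj1_sig Omega S) @^-1` F].
Arguments restr_fam {Omega} S X.

Definition restr_sf {Omega : Type} (A : set (set Omega)) (S : set Omega)
  (mu : set Omega -> R) : set {w : Omega | S w} -> R :=
  fun G => mu (epsilon (inhabits setT)
                 (fun F => A F /\ G = (@proj1_sig Omega S) @^-1` F)).
Arguments restr_sf {Omega} A S mu.

Definition induced_M {Omega N : Type} (S : set Omega) (I : set N)
  (M : N -> set (set Omega)) : {i : N | I i} -> set (set {w : Omega | S w}) :=
  fun j => restr_fam S (M (proj1_sig j)).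

Definition induced_t {Omega N : Type} (A : set (set Omega)) (S : set Omega) (I : set N)
  (t : N -> Omega -> set Omega -> R)
  : {i : N | I i} -> {w : Omega | S w} -> set {w : Omega | S w} -> R :=
  fun j w => restr_sf A S (t (proj1_sig j) (proj1_sig w)).

End TypeSpaces.
Arguments induced_M {Omega N} S I M.
Arguments restr_fam {Omega} S X.
Arguments restr_sf {R Omega} A S mu.
Arguments induced_t {R Omega N} A S I t.

(* Main.v *)
Require Import Defs.
From mathcomp Require Import all_boot all_order all_algebra.
From mathcomp Require Import all_classical all_reals.
From mathcomp Require Import all_boot all_order all_algebra.
From mathcomp Require Import all_classical all_reals numfun.
From mathcomp Require Import ring lra.
From Stdlib Require Import ClassicalEpsilon.
Set Implicit Arguments. Unset Strict Implicit. Unset Printing Implicit Defensive.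
Import Order.TTheory GRing.Theory Num.Theory.
Local Open Scope classical_set_scope.
Local Open Scope ring_scope.


Fixpoint Fa {T : Type} (P : T -> Prop) (s : seq T) : Prop :=
  if s is x :: s' then P x /\ Fa P s' else True.

Lemma Fa_cat {T} (P : T -> Prop) s1 s2 : Fa P (s1 ++ s2) <-> Fa P s1 /\ Fa P s2.
Proof. elim: s1 => [|x s1 IH] /=; [tauto| rewrite IH; tauto]. Qed.

Lemma Fa_map {T U} (P : U -> Prop) (f : T -> U) s : Fa P (map f s) <-> Fa (P \o f) s.
Proof. elim: s => [|x s IH] //=; rewrite IH. done. Qed.

Lemma Fa_impl {T} (P Q : T -> Prop) s : (forall x, P x -> Q x) -> Fa P s -> Fa Q s.
Proof. move=> H; elim: s => [|x s IH] //= [/H ? /IH ?]; done. Qed.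

Section Simple.
Context {R : realType} {Omega : Type}.
Implicit Types (A : set (set Omega)) (l : seq (R * set Omega)).

Definition sf l (w : Omega) : R := \sum_(p <- l) p.1 * \1_(p.2) w.
Definition sI (mu : set Omega -> R) l : R := \sum_(p <- l) p.1 * mu p.2.
Definition inA A l := Fa (fun p => A p.2) l.

Lemma Fa_ler_sum {T} (P : T -> Prop) (F G : T -> R) s :
  (forall x, P x -> F x <= G x) -> Fa P s -> \sum_(x <- s) F x <= \sum_(x <- s) G x.
Proof.
move=> H; elim: s => [|x s IH] /=; first by rewrite !big_nil.
by move=> [Px Ps]; rewrite !big_cons lerD // ?H // IH.
Qed.

Lemma sf_cons p l w : sf (p :: l) w = p.1 * \1_(p.2) w + sf l w.
Proof. by rewrite /sf big_cons. Qed.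
Lemma sI_cons mu p l : sI mu (p :: l) = p.1 * mu p.2 + sI mu l.
Proof. by rewrite /sI big_cons. Qed.
Lemma sf_cat l1 l2 w : sf (l1 ++ l2) w = sf l1 w + sf l2 w.
Proof. by rewrite /sf big_cat. Qed.
Lemma sI_cat mu l1 l2 : sI mu (l1 ++ l2) = sI mu l1 + sI mu l2.
Proof. by rewrite /sI big_cat. Qed.

Definition negl l := [seq (- p.1, p.2) | p <- l].
Lemma sf_neg l w : sf (negl l) w = - sf l w.
Proof. by rewrite /sf big_map -sumrN; apply: eq_bigr => p _; rewrite mulNr. Qed.
Lemma sI_neg mu l : sI mu (negl l) = - sI mu l.
Proof. by rewrite /sI big_map -sumrN; apply: eq_bigr => p _; rewrite mulNr. Qed.
Lemma inA_neg A l : inA A l -> inA A (negl l).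
Proof. by rewrite /inA Fa_map. Qed.
Lemma inA_cat A l1 l2 : inA A l1 -> inA A l2 -> inA A (l1 ++ l2).
Proof. by rewrite /inA Fa_cat. Qed.

Definition lofI n (c : 'I_n -> R) (E : 'I_n -> set Omega) : seq (R * set Omega) :=
  [seq (c k, E k) | k <- enum 'I_n].
Lemma sf_lofI n (c : 'I_n -> R) E w : sf (lofI c E) w = simple_fun c E w.
Proof. by rewrite /sf /lofI big_map big_enum. Qed.
Lemma sI_lofI mu n (c : 'I_n -> R) E : sI mu (lofI c E) = \sum_(k < n) c k * mu (E k).
Proof. by rewrite /sI /lofI big_map big_enum. Qed.
Lemma inA_lofI A n (c : 'I_n -> R) E : (forall k, A (E k)) -> inA A (lofI c E).
Proof.
move=> H; rewrite /inA /lofI Fa_map.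
by elim: (enum _) => //= k s IH; split.
Qed.

Section Field.
Variable A : set (set Omega).
Hypothesis HA : is_field A.
Lemma fT : A setT. Proof. by case: HA. Qed.
Lemma fC X : A X -> A (~` X). Proof. by case: HA => _ [H _]; apply: H. Qed.
Lemma fI X Y : A X -> A Y -> A (X `&` Y). Proof. by case: HA => _ [_ H]; apply: H. Qed.
Lemma f0 : A set0. Proof. by rewrite -setCT; apply: fC; apply: fT. Qed.
Lemma fU X Y : A X -> A Y -> A (X `|` Y).
Proof. by move=> hX hY; rewrite -(setCK (X `|` Y)) setCU; apply/fC/fI; apply: fC. Qed.
Lemma fD X Y : A X -> A Y -> A (X `&` ~` Y).
Proof. by move=> hX hY; apply: fI => //; apply: fC. Qed.
End Field.

End Simple.

Lemma Fa_eq_sum {R : realType} {T} (P : T -> Prop) (F G : T -> R) s :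
  (forall x, P x -> F x = G x) -> Fa P s -> \sum_(x <- s) F x = \sum_(x <- s) G x.
Proof.
move=> H; elim: s => [|x s IH] /=; first by rewrite !big_nil.
by move=> [Px Ps]; rewrite !big_cons H // IH.
Qed.

Section Atoms.
Context {R : realType} {Omega : Type}.
Variable A : set (set Omega).
Hypothesis HA : is_field A.
Variable mu : set Omega -> R.
Hypothesis Hadd : fin_additive A mu.

Lemma mu0 : mu set0 = 0.
Proof.
have := Hadd (f0 HA) (f0 HA) (setI0 _); rewrite setU0 => h.
by apply: (addrI (mu set0)); rewrite addr0 -h.
Qed.

Lemma mu_split X Y : A X -> A Y -> mu X = mu (X `&` Y) + mu (X `&` ~` Y).
Proof.
move=> hX hY; rewrite -Hadd; first by rewrite -setIUr setUCr setIT.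
- exact: fI.
- exact: fD.
by rewrite setIACA setICr !setI0.
Qed.

Fixpoint atoms (l : seq (R * set Omega)) (F : set Omega) : seq (R * set Omega) :=
  match l with
  | [::] => [:: (0, F)]
  | p :: l' => [seq (p.1 + x.1, x.2) | x <- atoms l' (F `&` p.2)] ++ atoms l' (F `&` ~` p.2)
  end.

Lemma atoms_prop l F : A F -> inA A l ->
  Fa (fun x => A x.2 /\ x.2 `<=` F /\ forall w, x.2 w -> sf l w = x.1) (atoms l F).
Proof.
elim: l F => [|p l IH] F hF /=.
  by move=> _; split => //; split => //; split => // w _; rewrite /sf big_nil.
move=> [hp hl]; apply/Fa_cat; split.
  apply/Fa_map; apply: Fa_impl (IH _ (fI HA hF hp) hl) => x /= [h1 [h2 h3]].
  split => //; split; first by move=> w /h2 [].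
  by move=> w xw; rewrite sf_cons h3 // indicE mem_set ?mulr1 //; case: (h2 _ xw).
apply: Fa_impl (IH _ (fD HA hF hp) hl) => x /= [h1 [h2 h3]].
split => //; split; first by move=> w /h2 [].
move=> w xw; rewrite sf_cons h3 // indicE memNset ?mulr0 ?add0r //.
by case: (h2 _ xw).
Qed.

Lemma atoms_mass l F : A F -> inA A l -> \sum_(x <- atoms l F) mu x.2 = mu F.
Proof.
elim: l F => [|p l IH] F hF /=; first by rewrite big_seq1.
move=> [hp hl]; rewrite big_cat big_map /= IH ?IH //; first by rewrite -mu_split.
- exact: fD.
exact: fI.
Qed.

Lemma atoms_sel (q : set Omega -> bool) l F : A F -> inA A l ->
  exists U, A U /\ U `<=` F /\ \sum_(x <- atoms l F | q x.2) mu x.2 = mu U.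
Proof.
elim: l F => [|p l IH] F hF /=.
  move=> _; rewrite big_cons big_nil /=; case: (q F).
    by exists F; rewrite addr0; split => //; split.
  by exists set0; split; [exact: f0| split; [by []| rewrite mu0]].
move=> [hp hl]; rewrite big_cat big_map /=.
have [U1 [h1 [s1 e1]]] := IH _ (fI HA hF hp) hl.
have [U2 [h2 [s2 e2]]] := IH _ (fD HA hF hp) hl.
exists (U1 `|` U2); split; first exact: fU.
split.
  by move=> w [/s1 []|/s2 []].
rewrite e1 e2 Hadd //.
rewrite -subset0 => w [/s1 [_ a] /s2 [_ b]]; exact: b.
Qed.

Lemma atoms_val l F : A F -> inA A l ->
  \sum_(p <- l) p.1 * mu (p.2 `&` F) = \sum_(x <- atoms l F) x.1 * mu x.2.
Proof.
elim: l F => [|p l IH] F hF /=; first by rewrite big_nil big_seq1 mul0r.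
move=> [hp hl]; rewrite big_cons big_cat big_map /=.
have -> : \sum_(j <- l) j.1 * mu (j.2 `&` F) =
   \sum_(j <- l) j.1 * mu (j.2 `&` (F `&` p.2)) + \sum_(j <- l) j.1 * mu (j.2 `&` (F `&` ~` p.2)).
  rewrite -big_split /=; apply: (Fa_eq_sum (P := fun p : R * set Omega => A p.2) _ hl) => j hj /=.
  by rewrite -mulrDr !setIA -mu_split //; apply: fI.
rewrite (IH (F `&` p.2)) ?(IH (F `&` ~` p.2)) //; last 2 first.
- exact: fD.
- exact: fI.
under [X in _ = X + _]eq_bigr => x _ do rewrite mulrDl.
rewrite big_split /= -mulr_sumr atoms_mass ?(setIC F) ?addrA //.
exact: fI.
Qed.

Lemma KL (M r : R) l : (forall X, A X -> `|mu X| <= M) -> inA A l -> 0 <= r ->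
  (forall w, `|sf l w| <= r) -> `|sI mu l| <= 2 * M * r.
Proof.
move=> hM hl hr hs.
have -> : sI mu l = \sum_(x <- atoms l setT) x.1 * mu x.2.
  rewrite -atoms_val //; last exact: fT.
  by apply: eq_bigr => p _; rewrite setIT.
have hP := atoms_prop (fT HA) hl.
apply: le_trans (ler_norm_sum _ _ _) _.
apply: le_trans (Fa_ler_sum (G := fun x => r * `|mu x.2|) _ hP) _.
  move=> x [hx [_ hv]]; rewrite normrM.
  have [->|/set0P [w xw]] := eqVneq x.2 set0.
    by rewrite mu0 normr0 !mulr0.
  by rewrite -(hv _ xw); apply: ler_pM => //; apply: hs.
rewrite -mulr_sumr [X in _ <= X]mulrC ler_wpM2l //.
rewrite (bigID (fun x => 0 <= mu x.2)) /=.
have [U1 [hU1 [_ e1]]] := atoms_sel (fun X => 0 <= mu X) (fT HA) hl.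
have [U2 [hU2 [_ e2]]] := atoms_sel (fun X => ~~ (0 <= mu X)) (fT HA) hl.
have -> : \sum_(i <- atoms l setT | 0 <= mu i.2) `|mu i.2| = mu U1.
  by rewrite -e1; apply: eq_bigr => x /ger0_norm.
have -> : \sum_(i <- atoms l setT | ~~ (0 <= mu i.2)) `|mu i.2| = - mu U2.
  rewrite -e2 -sumrN; apply: eq_bigr => x; rewrite -ltNge => /ltW /ler0_norm //.
have := hM _ hU1; have := hM _ hU2.
rewrite !ler_norml => /andP [a b] /andP [c d].
lra.
Qed.

End Atoms.

Lemma small_zero {R : realType} (x C : R) : 0 <= C ->
  (forall e, 0 < e -> `|x| <= C * e) -> x = 0.
Proof.
move=> hC h; apply/eqP; rewrite -normr_le0; apply/ler_addgt0Pr => e he.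
rewrite add0r; apply: le_trans (h (e / (C + 1)) _) _.
  by apply: divr_gt0 => //; lra.
rewrite mulrA ler_pdivrMr; last lra.
nra.
Qed.

Section Integral.
Context {R : realType} {Omega : Type}.
Variable A : set (set Omega).
Hypothesis HA : is_field A.
Variable mu : set Omega -> R.
Hypothesis Hadd : fin_additive A mu.
Variable M : R.
Hypothesis hM : forall X, A X -> `|mu X| <= M.
Variable f : Omega -> R.
Hypothesis hf : inB A f.

Definition approx (l : seq (R * set Omega)) (r : R) :=
  inA A l /\ 0 <= r /\ forall w, `|f w - sf l w| <= r.

Lemma M_ge0 : 0 <= M.
Proof. exact: le_trans (normr_ge0 _) (hM (fT HA)). Qed.

Lemma approx_diff l r l' r' : approx l r -> approx l' r' ->
  `|sI mu l - sI mu l'| <= 2 * M * (r + r').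
Proof.
move=> [hl [hr hs]] [hl' [hr' hs']].
rewrite -sI_neg -sI_cat; apply: (KL HA Hadd hM).
- exact: inA_cat hl (inA_neg hl').
- lra.
move=> w; rewrite sf_cat sf_neg.
have := hs w; have := hs' w.
rewrite !ler_norml => /andP [a b] /andP [c d]; apply/andP; split; lra.
Qed.

Lemma approx_ex e : 0 < e -> exists l, approx l e.
Proof.
move=> he; have [n [c [E [hE hs]]]] := hf he.
exists (lofI c E); split; first exact: inA_lofI.
split; first exact: ltW.
by move=> w; rewrite sf_lofI; apply: ltW.
Qed.

Let X := [set y : R | exists l r, approx l r /\ y = sI mu l - 2 * M * r].

Lemma X_sup l r : approx l r -> sI mu l - 2 * M * r <= sup X <= sI mu l + 2 * M * r.
Proof.
move=> ha.
have ub : ubound X (sI mu l + 2 * M * r).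
  move=> y [l' [r' [ha' ->]]].
  have := approx_diff ha' ha; rewrite ler_norml => /andP [a b]; lra.
have ne : X !=set0.
  have [l1 h1] := approx_ex ltr01; by exists (sI mu l1 - 2 * M * 1); exists l1, 1.
apply/andP; split; last exact: ge_sup.
apply: sup_upper_bound; first by split => //; exists (sI mu l + 2 * M * r).
by exists l, r.
Qed.

Lemma integral_isX : integral_is A mu f (sup X).
Proof.
move=> eps he.
have hM0 := M_ge0.
exists (eps / (2 * M + 1)); first by apply: divr_gt0 => //; lra.
move=> n c E hE hs.
have ha : approx (lofI c E) (eps / (2 * M + 1)).
  split; first exact: inA_lofI.
  split; first by apply/ltW/divr_gt0 => //; lra.
  by move=> w; rewrite sf_lofI; apply: ltW.
have := X_sup ha; rewrite sI_lofI => /andP [a b].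
have : 2 * M * (eps / (2 * M + 1)) < eps.
  by rewrite mulrA ltr_pdivrMr; nra.
move=> h; rewrite ltr_norml; apply/andP; split; lra.
Qed.

Lemma integralE : integral A mu f = sup X.
Proof.
have hI : integral_is A mu f (integral A mu f).
  by apply: epsilon_spec; exists (sup X); exact: integral_isX.
apply/eqP; rewrite -subr_eq0; apply/eqP.
apply: (small_zero (C := 1 + 2 * M)).
  by have := M_ge0; lra.
move=> e he.
have [d hd hI'] := hI e he.
have hm : 0 < Num.min d e by rewrite lt_min hd he.
have [n [c [E [hE hs]]]] := hf hm.
have hmd : Num.min d e <= d by rewrite ge_min lexx.
have h1 := hI' n c E hE (fun w => lt_le_trans (hs w) hmd).
have ha : approx (lofI c E) (Num.min d e).
  split; first exact: inA_lofI.
  split; first exact: ltW.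
  by move=> w; rewrite sf_lofI; apply: ltW.
have := X_sup ha; rewrite sI_lofI => /andP [a b].
have hme : Num.min d e <= e by rewrite ge_min lexx orbT.
have hM0 := M_ge0.
move: h1; rewrite ltr_norml => /andP [u v].
rewrite ler_norml; apply/andP; split; nra.
Qed.

Lemma INT l r : approx l r -> `|sI mu l - integral A mu f| <= 2 * M * r.
Proof.
move=> ha; rewrite integralE; have := X_sup ha => /andP [a b].
rewrite ler_norml; apply/andP; split; lra.
Qed.

End Integral.

Lemma Fa_nth {T} (P : T -> Prop) s x0 k : Fa P s -> (k < size s)%N -> P (nth x0 s k).
Proof.
elim: s k => [|x s IH] [|k] //= [Px Ps] hk //; exact: IH.
Qed.

Section BLemmas.
Context {R : realType} {Omega : Type}.
Variable A : set (set Omega).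
Hypothesis HA : is_field A.

Lemma inB_of_list (f : Omega -> R) :
  (forall e, 0 < e -> exists l, inA A l /\ forall w, `|f w - sf l w| < e) -> inB A f.
Proof.
move=> h e he; have [l [hl hs]] := h e he.
exists (size l), (fun k : 'I_(size l) => (nth (0, setT) l k).1),
  (fun k : 'I_(size l) => (nth (0, setT) l k).2).
split; first by move=> k; apply: (Fa_nth (P := fun p => A p.2)).
move=> w; have -> : simple_fun (fun k : 'I_(size l) => (nth (0, setT) l k).1)
  (fun k : 'I_(size l) => (nth (0, setT) l k).2) w = sf l w.
  by rewrite /simple_fun /sf (big_nth (0, setT)) big_mkord.
exact: hs.
Qed.

Lemma inB_to_list (f : Omega -> R) : inB A f ->
  forall e, 0 < e -> exists l, inA A l /\ forall w, `|f w - sf l w| < e.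
Proof.
move=> hf e he; have [n [c [E [hE hs]]]] := hf e he.
by exists (lofI c E); split; [exact: inA_lofI| move=> w; rewrite sf_lofI].
Qed.

Lemma inB_sf (l : seq (R * set Omega)) : inA A l -> inB A (sf l).
Proof. by move=> hl; apply: inB_of_list => e he; exists l; split => // w; rewrite subrr normr0. Qed.

Lemma inB_ind F : A F -> inB A (\1_F : Omega -> R).
Proof.
move=> hF; have -> : (\1_F : Omega -> R) = sf [:: (1, F)].
  by apply: funext => w; rewrite sf_cons /sf big_nil mul1r addr0.
by apply: inB_sf.
Qed.

Lemma inB_lim (f : Omega -> R) :
  (forall e, 0 < e -> exists g, inB A g /\ forall w, `|f w - g w| <= e) -> inB A f.
Proof.
move=> h; apply: inB_of_list => e he.
have he2 : 0 < e / 2 by apply: divr_gt0.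
have [g [hg hfg]] := h _ he2.
have [l [hl hs]] := inB_to_list hg he2.
exists l; split => // w.
have := hfg w; have := hs w.
rewrite ltr_norml ler_norml => /andP [a b] /andP [c d].
rewrite ltr_norml; apply/andP; split; lra.
Qed.

Lemma inB_add (f g : Omega -> R) : inB A f -> inB A g -> inB A (fun w => f w + g w).
Proof.
move=> hf hg; apply: inB_of_list => e he.
have he2 : 0 < e / 2 by apply: divr_gt0.
have [l1 [hl1 hs1]] := inB_to_list hf he2.
have [l2 [hl2 hs2]] := inB_to_list hg he2.
exists (l1 ++ l2); split; first exact: inA_cat.
move=> w; rewrite sf_cat; have := hs1 w; have := hs2 w.
rewrite !ltr_norml => /andP [a b] /andP [c d]; apply/andP; split; lra.
Qed.

Lemma inB_scale (c : R) (f : Omega -> R) : inB A f -> inB A (fun w => c * f w).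
Proof.
move=> hf; apply: inB_of_list => e he.
have hc : 0 < `|c| + 1 by have := normr_ge0 c; lra.
have he2 : 0 < e / (`|c| + 1) by apply: divr_gt0.
have [l [hl hs]] := inB_to_list hf he2.
exists [seq (c * p.1, p.2) | p <- l]; split; first by rewrite /inA Fa_map.
move=> w; have -> : sf [seq (c * p.1, p.2) | p <- l] w = c * sf l w.
  by rewrite /sf big_map mulr_sumr; apply: eq_bigr => p _; rewrite mulrA.
rewrite -mulrBr normrM.
have h1 := hs w.
apply: (@le_lt_trans _ _ ((`|c| + 1) * `|f w - sf l w|)).
  by rewrite ler_wpM2r // lerDl.
by rewrite mulrC -ltr_pdivlMr.
Qed.

Lemma inB_0 : inB A (fun _ => 0 : R).
Proof.
have -> : (fun _ : Omega => 0 : R) = sf [::] by apply: funext => w; rewrite /sf big_nil.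
by apply: inB_sf.
Qed.

Lemma inB_sumseq {T} (s : seq T) (F : T -> Omega -> R) :
  Fa (fun x => inB A (F x)) s -> inB A (fun w => \sum_(x <- s) F x w).
Proof.
elim: s => [|x s IH] /=.
  by move=> _; under eq_fun => w do rewrite big_nil; exact: inB_0.
move=> [hx hs]; under eq_fun => w do rewrite big_cons.
exact: inB_add hx (IH hs).
Qed.

End BLemmas.

Section Mix.
Context {R : realType} {Omega : Type}.
Variable A : set (set Omega).
Hypothesis HA : is_field A.

Lemma mix_add n (lam : 'I_n -> R) (mu : 'I_n -> set Omega -> R) :
  (forall k, fin_additive A (mu k)) -> fin_additive A (fun E => \sum_k lam k * mu k E).
Proof.
move=> h E G hE hG hEG; rewrite -big_split /=; apply: eq_bigr => k _.
by rewrite (h k) // mulrDr.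
Qed.

Lemma mix_bound n (lam : 'I_n -> R) (mu : 'I_n -> set Omega -> R) (M : R) :
  (forall k X, A X -> `|mu k X| <= M) ->
  forall X, A X -> `|\sum_k lam k * mu k X| <= (\sum_k `|lam k|) * M.
Proof.
move=> h X hX; apply: le_trans (ler_norm_sum _ _ _) _.
rewrite mulr_suml; apply: ler_sum => k _; rewrite normrM.
by apply: ler_wpM2l => //; apply: h.
Qed.

Lemma int_indic (mu : set Omega -> R) M F : fin_additive A mu ->
  (forall X, A X -> `|mu X| <= M) -> A F -> integral A mu (\1_F : Omega -> R) = mu F.
Proof.
move=> hadd hM hF.
have ha : approx A (\1_F : Omega -> R) [:: (1, F)] 0.
  split; first by split.
  split => // w; rewrite sf_cons /sf big_nil mul1r addr0 subrr normr0 //.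
have := INT HA hadd hM (inB_ind (R := R) hF) ha.
rewrite sI_cons /sI big_nil mul1r addr0 mulr0 normr_le0 subr_eq0 => /eqP.
by move=> ->.
Qed.

Lemma mix_sI n (lam : 'I_n -> R) (mu : 'I_n -> set Omega -> R) l :
  sI (fun E => \sum_k lam k * mu k E) l = \sum_k lam k * sI (mu k) l.
Proof.
rewrite /sI; under eq_bigr => p _ do rewrite mulr_sumr.
rewrite exchange_big /=; apply: eq_bigr => k _; rewrite mulr_sumr.
by apply: eq_bigr => p _; rewrite !mulrA (mulrC (p.1)).
Qed.

Lemma int_conv n (lam : 'I_n -> R) (mu : 'I_n -> set Omega -> R) (f : Omega -> R) :
  (forall k, fin_additive A (mu k)) -> (forall k X, A X -> `|mu k X| <= 1) -> inB A f ->
  integral A (fun E => \sum_k lam k * mu k E) f = \sum_k lam k * integral A (mu k) f.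
Proof.
move=> hadd hb hf; apply/eqP; rewrite -subr_eq0; apply/eqP.
set L := \sum_k `|lam k|.
have hL : 0 <= L by apply: sumr_ge0 => k _.
apply: (small_zero (C := 4 * L)); first lra.
move=> e he; have [l hl] := approx_ex hf he.
have h1 := INT HA (mix_add lam hadd) (mix_bound lam hb) hf hl.
have h2 : forall k, `|sI (mu k) l - integral A (mu k) f| <= 2 * 1 * e.
  by move=> k; exact: (INT HA (hadd k) (hb k) hf hl).
rewrite mix_sI -/L in h1.
have h3 : `|\sum_k lam k * sI (mu k) l - \sum_k lam k * integral A (mu k) f| <= L * (2 * 1 * e).
  rewrite -sumrB; apply: le_trans (ler_norm_sum _ _ _) _; rewrite mulr_suml.
  by apply: ler_sum => k _; rewrite -mulrBr normrM; apply: ler_wpM2l.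
have e1 : 2 * (L * 1) * e = 2 * (L * e) by ring.
have e2 : L * (2 * 1 * e) = 2 * (L * e) by ring.
have e3 : 4 * L * e = 4 * (L * e) by ring.
move: h1 h3; rewrite e1 e2 e3 !ler_norml => /andP [a b] /andP [c d].
apply/andP; split; lra.
Qed.

End Mix.

Lemma GEN {R : realType} {O1 O2 : Type} (A1 : set (set O1)) (A2 : set (set O2))
  (HA1 : is_field A1) (HA2 : is_field A2) (mu1 : set O1 -> R) (mu2 : set O2 -> R) (M1 M2 : R)
  (h1 : fin_additive A1 mu1) (b1 : forall X, A1 X -> `|mu1 X| <= M1)
  (h2 : fin_additive A2 mu2) (b2 : forall X, A2 X -> `|mu2 X| <= M2)
  (f1 : O1 -> R) (f2 : O2 -> R) (hf1 : inB A1 f1) (hf2 : inB A2 f2) (a : R) :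
  (forall r, 0 < r -> exists l1 l2, approx A1 f1 l1 r /\ approx A2 f2 l2 r /\
      sI mu2 l2 = a * sI mu1 l1) ->
  integral A2 mu2 f2 = a * integral A1 mu1 f1.
Proof.
move=> h; apply/eqP; rewrite -subr_eq0; apply/eqP.
have hM1 := M_ge0 HA1 b1; have hM2 := M_ge0 HA2 b2.
apply: (small_zero (C := 2 * M2 + `|a| * (2 * M1))).
  by apply: addr_ge0; [lra| apply: mulr_ge0 => //; lra].
move=> e he; have [l1 [l2 [a1 [a2 ee]]]] := h e he.
have i1 := INT HA1 h1 b1 hf1 a1; have i2 := INT HA2 h2 b2 hf2 a2.
have -> : integral A2 mu2 f2 - a * integral A1 mu1 f1 =
  - (sI mu2 l2 - integral A2 mu2 f2) + a * (sI mu1 l1 - integral A1 mu1 f1).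
  by rewrite ee; ring.
apply: le_trans (ler_normD _ _) _; rewrite normrN normrM mulrDl.
apply: lerD; first exact: i2.
by rewrite -mulrA; apply: ler_wpM2l.
Qed.

Section PBA.
Context {R : realType} {Omega : Type}.
Variable A : set (set Omega).
Hypothesis HA : is_field A.
Variable P : set Omega -> R.
Hypothesis HP : pba A P.

Let Hadd : fin_additive A P. Proof. by case: HP. Qed.
Lemma pba_ge0 X : A X -> 0 <= P X. Proof. by case: HP => _ [h _]; apply: h. Qed.
Lemma pba_T : P setT = 1. Proof. by case: HP => _ []. Qed.
Lemma pba_C X : A X -> P (~` X) = 1 - P X.
Proof.
move=> hX; have := Hadd hX (fC HA hX) (setICr X); rewrite setUCr pba_T => h.
lra.
Qed.
Lemma pba_le1 X : A X -> P X <= 1.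
Proof. move=> hX; have := pba_ge0 (fC HA hX); rewrite pba_C //; lra. Qed.
Lemma pba_bound X : A X -> `|P X| <= 1.
Proof. by move=> hX; rewrite ger0_norm ?pba_ge0 ?pba_le1. Qed.
Lemma pba_add : fin_additive A P. Proof. exact: Hadd. Qed.
Lemma pba_mono X Y : A X -> A Y -> X `<=` Y -> P X <= P Y.
Proof.
move=> hX hY sXY; rewrite (mu_split HA Hadd hY hX).
have -> : Y `&` X = X by rewrite setIC; apply/setIidPl.
have := pba_ge0 (fD HA hY hX); lra.
Qed.
Lemma pba_restr1 E F : A E -> A F -> P E = 1 -> P F = P (F `&` E).
Proof.
move=> hE hF h1; rewrite (mu_split HA Hadd hF hE).
have : P (F `&` ~` E) <= P (~` E) by apply: pba_mono; [exact: fD|exact: fC|apply: subIsetr].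
rewrite pba_C // h1 => h; have := pba_ge0 (fD HA hF hE); lra.
Qed.
Lemma pba_and1 X Y : A X -> A Y -> P X = 1 -> P Y = 1 -> P (X `&` Y) = 1.
Proof. by move=> hX hY h1 h2; rewrite setIC -pba_restr1. Qed.
Lemma pba_ne X : P X != 0 -> X !=set0.
Proof.
move=> h; apply/set0P; apply: contra h => /eqP ->; rewrite (mu0 HA Hadd) //.
Qed.
End PBA.

Section Restr.
Context {R : realType} {Omega : Type}.
Variable A : set (set Omega).
Hypothesis HA : is_field A.
Variable S : set Omega.
Local Notation sub := {w : Omega | S w}.
Local Notation AS := (restr_fam S A).
Local Notation val := (@proj1_sig Omega S).

Lemma AS_field : is_field AS.
Proof.
split; first by exists setT; [exact: fT|by rewrite preimage_setT].
split.
  by move=> G [F hF ->]; exists (~` F); [exact: fC|rewrite preimage_setC].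
by move=> G H [F hF ->] [F' hF' ->]; exists (F `&` F'); [exact: fI|rewrite preimage_setI].
Qed.

Definition pickF (G : set sub) : set Omega :=
  epsilon (inhabits setT) (fun F => A F /\ G = val @^-1` F).

Lemma pickF_spec G : AS G -> A (pickF G) /\ G = val @^-1` (pickF G).
Proof.
move=> [F hF ->]; have := epsilon_spec (inhabits setT) (fun F' => A F' /\ val @^-1` F = val @^-1` F').
by apply; exists F.
Qed.

Lemma restr_sfE (mu : set Omega -> R) G : restr_sf A S mu G = mu (pickF G).
Proof. by []. Qed.

Lemma PF_add (Q : set sub -> R) : fin_additive AS Q ->
  fin_additive A (fun F => Q (val @^-1` F)).
Proof.
move=> h F G hF hG hFG /=; rewrite preimage_setU h //.
- by exists F.
- by exists G.
by rewrite -preimage_setI hFG preimage_set0.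
Qed.

Lemma PF_bound (Q : set sub -> R) M : (forall G, AS G -> `|Q G| <= M) ->
  forall F, A F -> `|Q (val @^-1` F)| <= M.
Proof. by move=> h F hF; apply: h; exists F. Qed.

Definition lval (l : seq (R * set Omega)) := [seq (p.1, val @^-1` p.2) | p <- l].

Lemma sf_lval l x : sf (lval l) x = sf l (val x).
Proof. by rewrite /sf big_map; apply: eq_bigr => p _; rewrite /= !indicE. Qed.

Lemma inA_lval l : inA A l -> inA AS (lval l).
Proof. by rewrite /inA Fa_map; apply: Fa_impl => p hp; exists p.2. Qed.

Lemma approx_lval f l r : approx A f l r -> approx AS (f \o val) (lval l) r.
Proof.
move=> [hl [hr hs]]; split; first exact: inA_lval.
by split => // x; rewrite sf_lval; apply: hs.
Qed.

Lemma inB_val (f : Omega -> R) : inB A f -> inB AS (f \o val).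
Proof.
move=> hf; apply: inB_of_list => e he.
have [l [hl hs]] := inB_to_list hf he.
exists (lval l); split; first exact: inA_lval.
by move=> x; rewrite sf_lval; apply: hs.
Qed.

Lemma TR (nu : set sub -> R) (mu : set Omega -> R) M1 M2 (f : Omega -> R) :
  fin_additive AS nu -> (forall G, AS G -> `|nu G| <= M2) ->
  fin_additive A mu -> (forall X, A X -> `|mu X| <= M1) ->
  (forall F, A F -> nu (val @^-1` F) = mu F) -> inB A f ->
  integral AS nu (f \o val) = integral A mu f.
Proof.
move=> h2 b2 h1 b1 hnu hf.
rewrite -[RHS]mul1r; apply: (GEN HA AS_field h1 b1 h2 b2 hf (inB_val hf)).
move=> r hr; have [l hl] := approx_ex hf hr.
exists l, (lval l); split => //; split; first exact: approx_lval.
rewrite mul1r /sI big_map /=.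
case: hl => hl _.
apply: (Fa_eq_sum (P := fun p : R * set Omega => A p.2) _ hl) => p hp /=.
by rewrite hnu.
Qed.

Variable E0 : set Omega.
Hypothesis E0S : E0 `<=` S.

Lemma preE0 F F' : val @^-1` F = val @^-1` F' -> F `&` E0 = F' `&` E0.
Proof.
move=> h; apply/seteqP; split => w [hw ew]; split => //.
  have : (val @^-1` F) (exist _ w (E0S ew)) by [].
  by rewrite h.
have : (val @^-1` F') (exist _ w (E0S ew)) by [].
by rewrite -h.
Qed.

Hypothesis hE0 : A E0.

Lemma RA_add (nu : set sub -> R) (mu : set Omega -> R) (a : R) :
  fin_additive A mu -> (forall F, A F -> nu (val @^-1` F) = a * mu (F `&` E0)) ->
  fin_additive AS nu.
Proof.
move=> hmu hnu G1 G2 [F1 h1 ->] [F2 h2 ->] hd.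
rewrite -preimage_setU !hnu //; last exact: fU.
rewrite setIUl hmu; first by rewrite mulrDr.
- exact: fI.
- exact: fI.
apply/seteqP; split => // w [[a1 e1] [a2 e2]].
have : (val @^-1` F1 `&` val @^-1` F2) (exist _ w (E0S e1)) by [].
by rewrite hd.
Qed.

Lemma RA_bound (nu : set sub -> R) (mu : set Omega -> R) (a M : R) :
  (forall X, A X -> `|mu X| <= M) -> (forall F, A F -> nu (val @^-1` F) = a * mu (F `&` E0)) ->
  forall G, AS G -> `|nu G| <= `|a| * M.
Proof.
move=> hM hnu G [F hF ->]; rewrite hnu // normrM; apply: ler_wpM2l => //.
by apply: hM; apply: fI.
Qed.

Definition ext (g : sub -> R) : Omega -> R :=
  fun w => if pselect (E0 w) is left h then g (exist _ w (E0S h)) else 0.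

Definition lE0 (l : seq (R * set sub)) := [seq (p.1, pickF p.2 `&` E0) | p <- l].

Lemma inA_lE0 l : inA AS l -> inA A (lE0 l).
Proof.
rewrite /inA Fa_map; apply: Fa_impl => p hp /=.
by apply: fI => //; case: (pickF_spec hp).
Qed.

Lemma sf_lE0 l w (h : E0 w) : inA AS l -> sf (lE0 l) w = sf l (exist _ w (E0S h)).
Proof.
move=> hl; rewrite /sf big_map.
apply: (Fa_eq_sum (P := fun p : R * set sub => AS p.2) _ hl) => p hp /=.
rewrite !indicE; congr (_ * _%:R).
have [_ e] := pickF_spec hp.
rewrite [in RHS]e in_setI (mem_set h) andbT.
congr nat_of_bool.
Qed.

Lemma sf_lE0_out l w : ~ E0 w -> sf (lE0 l) w = 0.
Proof.
move=> h; rewrite /sf big_map big1 // => p _ /=.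
by rewrite indicE memNset ?mulr0 // => -[].
Qed.

Lemma ext_in g w (h : E0 w) : ext g w = g (exist _ w (E0S h)).
Proof.
rewrite /ext; case: pselect => [h'|//].
by congr g; apply: eq_exist.
Qed.
Lemma ext_out g w : ~ E0 w -> ext g w = 0.
Proof. by rewrite /ext; case: pselect. Qed.

Lemma approx_ext g l r : approx AS g l r -> approx A (ext g) (lE0 l) r.
Proof.
move=> [hl [hr hs]]; split; first exact: inA_lE0.
split => // w; case: (pselect (E0 w)) => h.
  by rewrite ext_in sf_lE0.
by rewrite ext_out // sf_lE0_out // subrr normr0.
Qed.

Lemma inB_ext g : inB AS g -> inB A (ext g).
Proof.
move=> hg; apply: inB_of_list => e he.
have he2 : 0 < e / 2 by apply: divr_gt0.
have [l hl] := approx_ex hg he2.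
exists (lE0 l); have [hl' [_ hs]] := approx_ext hl; split => // w.
apply: le_lt_trans (hs w) _; lra.
Qed.

Lemma TRQ (nu : set sub -> R) (mu : set Omega -> R) (a M : R) (g : sub -> R) :
  fin_additive A mu -> (forall X, A X -> `|mu X| <= M) ->
  (forall F, A F -> nu (val @^-1` F) = a * mu (F `&` E0)) -> inB AS g ->
  integral AS nu g = a * integral A mu (ext g).
Proof.
move=> h1 b1 hnu hg.
apply: (GEN HA AS_field h1 b1 (RA_add h1 hnu) (RA_bound b1 hnu) (inB_ext hg) hg).
move=> r hr; have [l hl] := approx_ex hg hr.
exists (lE0 l), l; split; first exact: approx_ext.
split => //.
rewrite /sI big_map mulr_sumr.
case: hl => hl _.
apply: (Fa_eq_sum (P := fun p : R * set sub => AS p.2) _ hl) => p hp /=.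
have [hF e] := pickF_spec hp.
by rewrite [in LHS]e hnu // mulrCA.
Qed.

End Restr.

Lemma Pi_ext {R : realType} {Omega : Type} (A : set (set Omega)) (C : set (set Omega -> R))
  (P : set Omega -> R) n (f : 'I_n -> Omega -> R) (g : Omega -> R) e :
  wstar_closure A C P -> (forall k, inB A (f k)) -> inB A g -> 0 < e ->
  exists Q, C Q /\ (forall k, `|integral A Q (f k) - integral A P (f k)| < e) /\
     `|integral A Q g - integral A P g| < e.
Proof.
move=> [_ hw] hf hg he.
pose F := fun k : 'I_n.+1 => if unlift ord_max k is Some k' then f k' else g.
have hF : forall k, inB A (F k).
  by move=> k; rewrite /F; case: (unlift ord_max k).
have [Q [hQ hc]] := hw n.+1 F hF e he.
exists Q; split => //; split.
  by move=> k; have := hc (lift ord_max k); rewrite /F liftK.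
by have := hc ord_max; rewrite /F unlift_none.
Qed.

Section TS.
Context {R : realType} {Omega N : Type}.
Variable A : set (set Omega).
Variable M : N -> set (set Omega).
Variable t : N -> Omega -> set Omega -> R.
Hypothesis hT : type_space A M t.

Lemma HA : is_field A. Proof. by case: hT => _ []. Qed.
Lemma HMi i : is_field (M i). Proof. by case: hT => _ [_ /(_ i) []]. Qed.
Lemma Hsub i : M i `<=` A. Proof. by case: hT => _ [_ /(_ i) [_ []]]. Qed.
Lemma HsubA i E : M i E -> A E. Proof. by move=> h; apply: (Hsub h). Qed.
Lemma Hpba i w : pba A (t i w). Proof. by case: hT => _ [_ /(_ i) [_ [_ []]]]. Qed.
Lemma HB i E : A E -> inB (M i) (fun w => t i w E).
Proof. by case: hT => _ [_ /(_ i) [_ [_ [_ []]]]] => h _; apply: h. Qed.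
Lemma Hone i E w : M i E -> E w -> t i w E = 1.
Proof. by case: hT => _ [_ /(_ i) [_ [_ [_ [_ h]]]]]; apply: h. Qed.

Lemma t_add i w : fin_additive A (t i w). Proof. exact: pba_add (Hpba i w). Qed.
Lemma t_bound i w X : A X -> `|t i w X| <= 1. Proof. move=> hX; have := pba_bound HA (Hpba i w) hX. done. Qed.

Lemma Hzero i E w : M i E -> ~ E w -> t i w E = 0.
Proof.
move=> hE nE; have hC : M i (~` E) := fC (HMi i) hE.
have := Hone hC nE; rewrite (pba_C HA (Hpba i w) (HsubA hE)).
lra.
Qed.

Lemma conv_add i n (lam : 'I_n -> R) (ws : 'I_n -> Omega) :
  fin_additive A (fun E => \sum_k lam k * t i (ws k) E).
Proof. by apply: mix_add => k; apply: t_add. Qed.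

Lemma conv_bound i n (lam : 'I_n -> R) (ws : 'I_n -> Omega) :
  (forall k, 0 <= lam k) -> \sum_k lam k = 1 ->
  forall X, A X -> `|\sum_k lam k * t i (ws k) X| <= 1.
Proof.
move=> h0 h1 X hX.
have := @mix_bound R Omega A n lam (fun k => t i (ws k)) 1 (fun k Y hY => t_bound i (ws k) hY) X hX.
have e : \sum_k `|lam k| = 1 by rewrite -h1; apply: eq_bigr => k _; rewrite ger0_norm.
by rewrite e mul1r.
Qed.

Lemma Pi_total i P : Pi A t i P -> P setT = 1.
Proof.
move=> hP; have [[hadd [MP hMP]] _] := (hP : wstar_closure _ _ _).
apply/eqP; rewrite -subr_eq0; apply/eqP.
apply: (small_zero (C := 1)) => // e he.
have hT1 := inB_ind (R := R) (fT HA).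
have [Q [[n [lam [ws [h0 [h1 ->]]]]] [_ hc]]] :=
  Pi_ext (f := fun _ : 'I_0 => \1_setT) hP (fun k => hT1) hT1 he.
move: hc; rewrite (int_indic HA hadd hMP (fT HA)).
rewrite (int_indic HA (conv_add i lam ws) (conv_bound i ws h0 h1) (fT HA)).
have -> : \sum_k lam k * t i (ws k) setT = 1.
  by rewrite -h1; apply: eq_bigr => k _; rewrite (pba_T (Hpba i (ws k))) mulr1.
by rewrite distrC mul1r => /ltW.
Qed.

End TS.

Lemma finite_sub {N : Type} (I : set N) : finite_set I -> finite_set [set: {i | I i}].
Proof.
move=> hI.
have := @finite_preimage _ _ I (@proj1_sig N I) _ hI.
have -> : (@proj1_sig N I) @^-1` I = [set: {i | I i}].
  by apply/seteqP; split => // -[x hx].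
apply; move=> [x hx] [y hy] _ _ /= e; exact: eq_exist.
Qed.

Section CC.
Context {R : realType} {Omega N : Type}.
Variable A : set (set Omega).
Variable M : N -> set (set Omega).
Variable t : N -> Omega -> set Omega -> R.
Hypothesis hT : type_space A M t.
Variable I : set N.
Variable S : set Omega.
Variable E0 : set Omega.
Hypothesis hE0 : A E0.
Hypothesis E0S : E0 `<=` S.
Hypothesis Ht1 : forall w i, S w -> I i -> t i w E0 = 1.
Local Notation sub := {w : Omega | S w}.
Local Notation val := (@proj1_sig Omega S).
Local Notation tS := (induced_t A S I t).

Lemma t_E0 i w F : S w -> I i -> A F -> t i w F = t i w (F `&` E0).
Proof. by move=> hw hi hF; apply: (pba_restr1 (HA hT) (Hpba hT i w)) => //; apply: Ht1. Qed.

Lemma tS_E0 (j : {i | I i}) (w : sub) F : A F ->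
  tS j w (val @^-1` F) = t (proj1_sig j) (val w) (F `&` E0).
Proof.
move=> hF; rewrite /induced_t restr_sfE.
have [hp e] := pickF_spec (A := A) (S := S) (G := val @^-1` F) (ex_intro2 _ _ F hF erefl).
rewrite (t_E0 (proj2_sig w) (proj2_sig j) hp); congr t.
by rewrite -(preE0 E0S e).
Qed.

Lemma tS_pre (j : {i | I i}) (w : sub) F : A F ->
  tS j w (val @^-1` F) = t (proj1_sig j) (val w) F.
Proof. by move=> hF; rewrite tS_E0 // -t_E0 //; [exact: proj2_sig|exact: proj2_sig]. Qed.

Lemma tS_add j w : fin_additive (restr_fam S A) (tS j w).
Proof.
apply: (RA_add (HA hT) E0S hE0 (mu := t (proj1_sig j) (val w)) (a := 1)).
  exact: (t_add hT).
by move=> F hF; rewrite mul1r tS_E0.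
Qed.

Lemma tS_bound j w G : restr_fam S A G -> `|tS j w G| <= 1.
Proof.
move=> hG; have := @RA_bound R Omega A (HA hT) S E0 hE0 (tS j w) (t (proj1_sig j) (val w)) 1 1
  (fun X hX => t_bound hT (proj1_sig j) (val w) hX).
rewrite normr1 mul1r; apply => //.
by move=> F hF; rewrite mul1r tS_E0.
Qed.

End CC.

Section Back.
Context {R : realType} {Omega N : Type}.
Variable A : set (set Omega).
Variable M : N -> set (set Omega).
Variable t : N -> Omega -> set Omega -> R.
Hypothesis hT : type_space A M t.

Lemma dir_back : (forall I, finite_set I -> forall S, cc_component A t I S ->
      consistent (restr_fam S A) (induced_t A S I t)) -> univ_consistent A t.
Proof.
move=> H I hI S hS.
have hS' := hS; case: hS => [[s0 hs0] [E0 [hE0 [E0S Ht1]]]].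
have HA' := HA hT.
case: (pselect (exists i, I i)) => [[i0 hi0]|hno]; last first.
  exists (fun F => \1_F s0 : R); split; [split|split].
  - move=> E G hE hG hEG; rewrite !indicE in_setU.
    case: (boolP (s0 \in E)) => hE'; case: (boolP (s0 \in G)) => hG' //=.
    + exfalso; have : (E `&` G) s0 by split; apply: set_mem.
      by rewrite hEG.
    + by rewrite addr0.
    + by rewrite add0r.
    + by rewrite addr0.
  - exists 1 => E _; rewrite indicE; case: (_ \in _); rewrite ?normr1 ?normr0 //.
  - by move=> i hi; exfalso; apply: hno; exists i.
  - by exists 1 => // E _ SE; rewrite indicE mem_set //; apply: SE.
have [Q [[hQa [MQ hQM]] hQ]] := H I hI S hS' [set: {i | I i}] (finite_sub hI).
pose P := fun F => Q ((@proj1_sig Omega S) @^-1` F).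
have hPa : fin_additive A P := PF_add hQa.
have hPM := PF_bound hQM.
have hPi : forall i, I i -> Pi A t i P.
  move=> i hi; split; first by split => //; exists MQ.
  move=> n f hf e he.
  have [_ hw] := hQ (exist _ i hi) Logic.I.
  have [Q' [[n' [lam [ws [h0 [h1 eQ']]]]] hc]] :=
    hw n (fun k => f k \o sval) (fun k => inB_val S (hf k)) e he.
  exists (fun E => \sum_k lam k * t i (sval (ws k)) E); split.
    by exists n', lam, (fun k => sval (ws k)).
  move=> k; have := hc k.
  rewrite (TR HA' hQa hQM hPa hPM (fun F _ => erefl) (hf k)).
  rewrite eQ' (TR HA' (mix_add lam (fun k' => tS_add hT hE0 E0S Ht1 (exist _ i hi) (ws k')))
     (mix_bound lam (fun k' => tS_bound hT hE0 E0S Ht1 (exist _ i hi) (ws k')))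
     (conv_add hT i lam (fun k => sval (ws k)))
     (conv_bound hT i (fun k => sval (ws k)) h0 h1) _ (hf k)) //.
  move=> F hF /=; apply: eq_bigr => k' _.
  by rewrite (tS_pre hT hE0 E0S Ht1).
have hP1 : P setT = 1 := Pi_total hT (hPi i0 hi0).
exists P; split; first by split => //; exists MQ.
split => //; exists 1 => // E hE SE.
rewrite -hP1 /P (_ : sval @^-1` E = sval @^-1` setT) //.
rewrite preimage_setT; apply/seteqP; split => // -[x hx] _; exact: SE.
Qed.

End Back.

Section LV.
Context {R : realType} {Omega : Type}.
Variable A : set (set Omega).
Hypothesis HA : is_field A.

Lemma LV_aux (l : seq (R * set Omega)) : forall (p : R -> Prop) F, A F -> inA A l ->
  A (F `&` [set w | p (sf l w)]).
Proof.
elim: l => [|q l IH] p F hF /=.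
  move=> _; case: (pselect (p 0)) => hp.
    have -> : F `&` [set w | p (sf [::] w)] = F.
      by apply/seteqP; split => [w []//|w hw]; split => //=; rewrite /sf big_nil.
    exact: hF.
  have -> : F `&` [set w | p (sf [::] w)] = set0.
    by apply/seteqP; split => [w [_]|//]; rewrite /= /sf big_nil.
  exact: f0.
move=> [hq hl].
have -> : F `&` [set w | p (sf (q :: l) w)] =
  ((F `&` q.2) `&` [set w | (fun x => p (q.1 + x)) (sf l w)]) `|`
  ((F `&` ~` q.2) `&` [set w | p (sf l w)]).
  apply/seteqP; split => w.
    move=> [hw]; rewrite /= sf_cons indicE.
    case: (pselect (q.2 w)) => h.
      by rewrite mem_set // mulr1 => hp; left.
    by rewrite memNset // mulr0 add0r => hp; right.
  rewrite /= sf_cons indicE.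
  case=> [[[hw h] hp]|[[hw h] hp]]; split => //.
    by rewrite mem_set // mulr1.
  by rewrite memNset // mulr0 add0r.
apply: fU => //.
  by apply: (IH (fun x => p (q.1 + x))) => //; apply: fI.
by apply: IH => //; apply: fD.
Qed.

Lemma LV (l : seq (R * set Omega)) (p : R -> Prop) : inA A l -> A [set w | p (sf l w)].
Proof.
move=> hl; have := LV_aux p (fT HA) hl; by rewrite setTI.
Qed.

Lemma field_bigI n (X : 'I_n -> set Omega) : (forall k, A (X k)) -> A [set w | forall k, X k w].
Proof.
elim: n X => [|n IH] X hX.
  have -> : [set w | forall k : 'I_0, X k w] = setT.
    by apply/seteqP; split => // w _ [].
  exact: fT.
have -> : [set w | forall k, X k w] = X ord0 `&` [set w | forall k : 'I_n, X (lift ord0 k) w].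
  apply/seteqP; split => w.
    by move=> h; split => // k; apply: h.
  move=> [h0 h] k; case: (unliftP ord0 k) => [j ->|->] //.
apply: fI => //; apply: IH => k; exact: hX.
Qed.
End LV.

Section Fwd.
Context {R : realType} {Omega N : Type}.
Variable A : set (set Omega).
Variable M : N -> set (set Omega).
Variable t : N -> Omega -> set Omega -> R.
Hypothesis hT : type_space A M t.
Variable I : set N.
Variable S : set Omega.
Variable E0 : set Omega.
Hypothesis hE0 : A E0.
Hypothesis E0S : E0 `<=` S.
Hypothesis Ht1 : forall w i, S w -> I i -> t i w E0 = 1.
Variable i : N.
Hypothesis hi : I i.

Let HA' := HA hT.

Lemma zero_one w : t i w E0 = 0 \/ t i w E0 = 1.
Proof.
have [h0|hn0] := eqVneq (t i w E0) 0; [by left| right].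
apply/eqP; rewrite -subr_eq0; apply/eqP.
apply: (small_zero (C := 2)) => // e he.
have [l [hl hs]] := inB_to_list (HB hT i hE0) he.
set F' := [set v | sf l v = sf l w].
have hF' : M i F' := LV (HMi hT i) (fun x => x = sf l w) hl.
have tF' : t i w F' = 1 by apply: (Hone hT hF').
have e1 : t i w (E0 `&` F') = t i w E0.
  by rewrite -(pba_restr1 HA' (Hpba hT i w) (HsubA hT hF') hE0 tF').
have [w' [ew' fw']] : (E0 `&` F') !=set0.
  apply: (pba_ne HA' (Hpba hT i w)); by rewrite e1.
have h1 : t i w' E0 = 1 := Ht1 (E0S ew') hi.
have := hs w; have := hs w'; rewrite h1 fw'.
rewrite !ltr_norml => /andP [a b] /andP [c d].
rewrite distrC ler_norml; apply/andP; split; lra.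
Qed.

Definition Bset := [set v | t i v E0 = 1].

Lemma Bset_M : M i Bset.
Proof.
have h2 : (0 : R) < 1 / 2 by lra.
have [l [hl hs]] := inB_to_list (HB hT i hE0) h2.
have -> : Bset = [set v | 1 / 2 < sf l v].
  apply/seteqP; split => v /=.
    by move=> h; have := hs v; rewrite h ltr_norml => /andP [a b]; lra.
  move=> h; case: (zero_one v) => // h0.
  by have := hs v; rewrite h0 ltr_norml => /andP [a b]; lra.
exact: (LV (HMi hT i) (fun x => 1 / 2 < x) hl).
Qed.

Lemma t_B v : t i v E0 = t i v Bset.
Proof.
case: (zero_one v) => h.
  by rewrite h (Hzero hT Bset_M) // /Bset /= h => /eqP; rewrite eq_sym oner_eq0.
by rewrite h (Hone hT Bset_M).
Qed.

Lemma S_B : S `<=` Bset.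
Proof. by move=> w hw; apply: Ht1. Qed.

Lemma PE0 P : Pi A t i P -> P E0 = P Bset.
Proof.
move=> hP; have [[hadd [MP hMP]] _] := (hP : wstar_closure _ _ _).
apply/eqP; rewrite -subr_eq0; apply/eqP.
apply: (small_zero (C := 2)) => // e he.
have hBA := HsubA hT Bset_M.
have [Q [[n [lam [ws [h0 [h1 ->]]]]] [hc1 hc2]]] :=
  Pi_ext (f := fun _ : 'I_1 => \1_E0) hP (fun k => inB_ind (R := R) hE0) (inB_ind (R := R) hBA) he.
have := hc1 ord0 => {hc1} hc1.
move: hc1 hc2.
rewrite (int_indic HA' hadd hMP hE0) (int_indic HA' hadd hMP hBA).
rewrite (int_indic HA' (conv_add hT i lam ws) (conv_bound hT i ws h0 h1) hE0).
rewrite (int_indic HA' (conv_add hT i lam ws) (conv_bound hT i ws h0 h1) hBA).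
have -> : \sum_k lam k * t i (ws k) E0 = \sum_k lam k * t i (ws k) Bset.
  by apply: eq_bigr => k _; rewrite t_B.
rewrite !ltr_norml => /andP [a b] /andP [c d].
rewrite ler_norml; apply/andP; split; lra.
Qed.

Definition phi (f : Omega -> R) (v : Omega) : R := integral A (t i v) f.

Lemma phi_B f : inB A f -> inB (M i) (phi f).
Proof.
move=> hf; apply: inB_lim => e he.
have he2 : 0 < e / 2 by apply: divr_gt0.
have [l hl] := approx_ex hf he2.
exists (fun v => sI (t i v) l); split.
  rewrite /sI; apply: inB_sumseq.
  case: hl => hl _; move: hl; rewrite /inA; apply: Fa_impl => p hp.
  exact: (inB_scale p.1 (HB hT i hp)).
move=> v; have := INT HA' (t_add hT i v) (fun X hX => t_bound hT i v hX) hf hl.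
by rewrite distrC; move/le_trans; apply; lra.
Qed.

Lemma NEAR n (f : 'I_n -> Omega -> R) : (forall k, inB A (f k)) ->
  forall v, t i v E0 = 1 -> forall eta, 0 < eta ->
  exists w', E0 w' /\ forall k, `|phi (f k) w' - phi (f k) v| < eta.
Proof.
move=> hf v hv eta he.
have he2 : 0 < eta / 2 by apply: divr_gt0.
have [L hL] := choice _ (fun k => inB_to_list (phi_B (hf k)) he2).
set F' := [set u | forall k, sf (L k) u = sf (L k) v].
have hF' : M i F'.
  apply: (field_bigI (HMi hT i) (X := fun k u => sf (L k) u = sf (L k) v)) => k.
  exact: (LV (HMi hT i) (fun x => x = sf (L k) v) (proj1 (hL k))).
have tF' : t i v F' = 1 by apply: (Hone hT hF').
have e1 : t i v (E0 `&` F') = 1.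
  exact: (pba_and1 HA' (Hpba hT i v) hE0 (HsubA hT hF') hv tF').
have [w' [ew' fw']] : (E0 `&` F') !=set0.
  apply: (pba_ne HA' (Hpba hT i v)); by rewrite e1 oner_eq0.
exists w'; split => // k.
have [_ hs] := hL k.
have := hs w'; have := hs v; rewrite (fw' k).
rewrite !ltr_norml => /andP [a b] /andP [c d].
apply/andP; split; lra.
Qed.

Lemma ZERO v g : t i v E0 = 0 -> inB (restr_fam S A) g ->
  integral A (t i v) (ext E0S g) = 0.
Proof.
move=> h0 hg; apply: (small_zero (C := 2)) => // e he.
have [l hl] := approx_ex hg he.
have ha := approx_ext HA' E0S hE0 hl.
have := INT HA' (t_add hT i v) (fun X hX => t_bound hT i v hX) (inB_ext HA' E0S hE0 hg) ha.
have -> : sI (t i v) (lE0 A E0 l) = 0.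
  rewrite /sI big_map.
  case: hl => hl _.
  rewrite (Fa_eq_sum (P := fun p : R * set {w | S w} => restr_fam S A p.2)
    (G := fun _ => 0) _ hl) ?big1 // => p hp /=.
  have [hF _] := pickF_spec hp.
  have hFE : A (pickF A p.2 `&` E0) by apply: fI.
  have := pba_mono HA' (Hpba hT i v) hFE hE0 (@subIsetr _ _ _).
  have := pba_ge0 (Hpba hT i v) hFE.
  rewrite h0 => a b.
  have -> : t i v (pickF A p.2 `&` E0) = 0 by apply/eqP; rewrite eq_le a b.
  by rewrite mulr0.
by rewrite sub0r normrN mulr1.
Qed.

End Fwd.

Lemma FIN {R : realType} (X Y D D' G eta eps : R) : 0 < D -> D / 2 <= D' ->
  `|Y - X| <= 2 * eta -> `|D' - D| <= eta -> `|X| <= G ->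
  eta * (4 * D^-1 + 2 * G * (D^-1 * D^-1)) < eps -> `|Y / D' - X / D| < eps.
Proof.
move=> hD hD' hYX hDD hX heps.
have hD2 : 0 < D / 2 by apply: divr_gt0.
have hD'0 : 0 < D' by apply: lt_le_trans hD2 hD'.
set a := D^-1; set b := D'^-1.
have ha : 0 < a by rewrite invr_gt0.
have hb : 0 < b by rewrite invr_gt0.
have hba : b <= 2 * a.
  have -> : 2 * a = (D / 2)^-1 by rewrite /a invf_div.
  by rewrite /b lef_pV2 ?posrE.
have eta0 : 0 <= eta by apply: le_trans (normr_ge0 _) hDD.
have G0 : 0 <= G by apply: le_trans (normr_ge0 _) hX.
have e : Y / D' - X / D = (Y - X) * b + X * ((D - D') * a * b).
  rewrite /a /b; field; apply/andP; split; exact: lt0r_neq0.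
rewrite e; apply: le_lt_trans (ler_normD _ _) _.
apply: le_lt_trans heps.
rewrite mulrDr; apply: lerD.
  rewrite normrM (gtr0_norm hb).
  have -> : eta * (4 * a) = (2 * eta) * (2 * a) by ring.
  by apply: ler_pM => //; exact: ltW hb.
rewrite !normrM (gtr0_norm ha) (gtr0_norm hb) distrC.
have -> : eta * (2 * G * (D^-1 / D)) = G * eta * a * (2 * a) by rewrite /a; ring.
have -> : `|X| * (`|D' - D| * a * b) = (`|X| * `|D' - D| * a) * b by ring.
apply: ler_pM.
- by rewrite !mulr_ge0 // ltW.
- exact: ltW.
- apply: ler_pM.
  + by rewrite !mulr_ge0.
  + exact: ltW.
  + by apply: ler_pM.
  + by [].
- exact: hba.
Qed.

Section Main.
Context {R : realType} {Omega N : Type}.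
Variable A : set (set Omega).
Variable M : N -> set (set Omega).
Variable t : N -> Omega -> set Omega -> R.
Hypothesis hT : type_space A M t.
Variable I : set N.
Variable S : set Omega.
Variable E0 : set Omega.
Hypothesis hE0 : A E0.
Hypothesis E0S : E0 `<=` S.
Hypothesis Ht1 : forall w i, S w -> I i -> t i w E0 = 1.
Variable s0 : Omega.
Hypothesis hs0 : S s0.
Variable P : set Omega -> R.
Hypothesis hPadd : fin_additive A P.
Variable MP : R.
Hypothesis hPM : forall X, A X -> `|P X| <= MP.
Hypothesis hPi : forall i, I i -> Pi A t i P.
Hypothesis hD : 0 < P E0.

Let HA' := HA hT.
Local Notation sub := {w : Omega | S w}.
Local Notation val := (@proj1_sig Omega S).
Local Notation AS := (restr_fam S A).

Definition Qc (G : set sub) : R := P (pickF A G `&` E0) / P E0.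

Lemma QcE F : A F -> Qc (val @^-1` F) = (P E0)^-1 * P (F `&` E0).
Proof.
move=> hF; rewrite /Qc mulrC.
have [_ e] := pickF_spec (ex_intro2 (fun F' => A F') (fun F' => val @^-1` F = val @^-1` F') F hF erefl).
by rewrite -(preE0 E0S e).
Qed.

Lemma Qc_add : fin_additive AS Qc.
Proof. exact: (RA_add HA' E0S hE0 hPadd QcE). Qed.

Lemma Qc_bound G : AS G -> `|Qc G| <= `|(P E0)^-1| * MP.
Proof. exact: (RA_bound HA' hE0 hPM QcE). Qed.

Lemma Qc_Pi j : Pi AS (induced_t A S I t) j Qc.
Proof.
case: j => i hi; split; first by split; [exact: Qc_add| exists (`|(P E0)^-1| * MP); exact: Qc_bound].
move=> n g hg eps heps.
pose f := fun k => ext E0S (g k).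
have hf : forall k, inB A (f k) := fun k => inB_ext HA' E0S hE0 (hg k).
pose D := P E0.
pose X := fun k => integral A P (f k).
pose G := \sum_k `|X k|.
have G0 : 0 <= G by apply: sumr_ge0.
pose K := 4 * D^-1 + 2 * G * (D^-1 * D^-1).
have K0 : 0 <= K.
  by apply: addr_ge0; apply: mulr_ge0 => //; rewrite ?invr_ge0 ?mulr_ge0 ?invr_ge0 // ltW.
have hK1 : 0 < K + 1 by lra.
pose eta := Num.min (D / 2) (eps / (K + 1)).
have heta : 0 < eta by rewrite lt_min; apply/andP; split; apply: divr_gt0.
have eta1 : eta <= D / 2 by rewrite ge_min lexx.
have eta2 : eta <= eps / (K + 1) by rewrite ge_min lexx orbT.
have [P' [[n' [lam [ws [h0 [h1 eP']]]]] [hc1 hc2]]] :=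
  Pi_ext (hPi hi) hf (inB_ind (R := R) hE0) heta.
subst P'.
move: hc2; rewrite (int_indic HA' hPadd hPM hE0).
rewrite (int_indic HA' (conv_add hT i lam ws) (conv_bound hT i ws h0 h1) hE0).
set D' := \sum_k lam k * t i (ws k) E0; rewrite -/D => hc2.
have hDD : `|D' - D| <= eta by exact: ltW.
have hD' : D / 2 <= D'.
  move: hc2; rewrite ltr_norml => /andP [a b]; lra.
have hD'0 : 0 < D' by apply: lt_le_trans hD'; apply: divr_gt0.
have hWex : forall m, exists w' : sub, (t i (ws m) E0 = 1 ->
   forall k, `|phi A t i (f k) (val w') - phi A t i (f k) (ws m)| < eta).
  move=> m; case: (pselect (t i (ws m) E0 = 1)) => hm.
    have [w' [ew' hw']] := NEAR hT hE0 hf hm heta.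
    by exists (exist _ w' (E0S ew')).
  by exists (exist _ s0 hs0).
have [W hW] := choice _ hWex.
pose mu := fun m => lam m * t i (ws m) E0 / D'.
have hh0 : forall m, 0 <= t i (ws m) E0 := fun m => pba_ge0 (Hpba hT i (ws m)) hE0.
exists (fun G => \sum_m mu m * induced_t A S I t (exist _ i hi) (W m) G).
split.
  exists n', mu, W; split.
    move=> m; rewrite /mu; apply: divr_ge0; [exact: mulr_ge0 | exact: ltW].
  split => //.
  by rewrite /mu -mulr_suml -/D' mulfV //; apply: lt0r_neq0.
move=> k.
have eT : forall w : sub, integral AS (induced_t A S I t (exist _ i hi) w) (g k)
    = phi A t i (f k) (val w).
  move=> w; rewrite (TRQ HA' E0S hE0 (t_add hT i (val w))
    (fun X hX => t_bound hT i (val w) hX) (a := 1) _ (hg k)) ?mul1r //.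
  by move=> F hF; rewrite mul1r (tS_E0 hT hE0 E0S Ht1).
rewrite (int_conv (AS_field HA' S) mu (fun m => tS_add hT hE0 E0S Ht1 _ (W m))
   (fun m X hX => tS_bound hT hE0 E0S Ht1 _ (W m) hX) (hg k)).
under eq_bigr => m _ do rewrite eT.
rewrite (TRQ HA' E0S hE0 hPadd hPM QcE (hg k)).
pose Y := \sum_m lam m * t i (ws m) E0 * phi A t i (f k) (val (W m)).
have -> : \sum_m mu m * phi A t i (f k) (val (W m)) = Y / D'.
  by rewrite /Y mulr_suml; apply: eq_bigr => m _; rewrite /mu mulrAC.
have -> : (P E0)^-1 * integral A P (ext E0S (g k)) = X k / D by rewrite mulrC.
have hXk : `|X k| <= G.
  by rewrite /G (bigD1 k) //= lerDl sumr_ge0.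
have hK : eta * K < eps.
  apply: le_lt_trans (ler_wpM2r K0 eta2) _.
  by rewrite mulrAC ltr_pdivrMr // ltr_pM2l // ltrDl ltr01.
pose X' := \sum_m lam m * phi A t i (f k) (ws m).
have hX' : `|X' - X k| < eta.
  have := hc1 k.
  rewrite (int_conv HA' lam (fun m => t_add hT i (ws m)) (fun m X hX => t_bound hT i (ws m) hX) (hf k)).
  by [].
have hYX' : `|Y - X'| <= eta.
  rewrite /Y /X' -sumrB; apply: le_trans (ler_norm_sum _ _ _) _.
  apply: le_trans (_ : \sum_m lam m * eta <= _).
    apply: ler_sum => m _.
    case: (zero_one hT hE0 E0S Ht1 hi (ws m)) => hm.
      have -> : phi A t i (f k) (ws m) = 0 by apply: (ZERO hT hE0 E0S hm (hg k)).
      by rewrite hm !mulr0 mul0r subrr normr0 mulr_ge0 // ltW.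
    rewrite hm mulr1 -mulrBr normrM ger0_norm //.
    by apply: ler_wpM2l => //; apply: ltW; apply: hW.
  by rewrite -mulr_suml h1 mul1r.
apply: (FIN (D := D) hD hD' _ hDD hXk hK).
move: hX' hYX'; rewrite ltr_norml !ler_norml => /andP [a b] /andP [c d].
apply/andP; split; lra.
Qed.
End Main.

Lemma dir_fwd {R : realType} {Omega N : Type} (A : set (set Omega))
  (M : N -> set (set Omega)) (t : N -> Omega -> set Omega -> R) :
  type_space A M t -> univ_consistent A t ->
  forall I : set N, finite_set I -> forall S : set Omega, cc_component A t I S ->
      consistent (restr_fam S A) (induced_t A S I t).
Proof.
move=> hT hU I hI S hS J hJ.
have hS' := hS; case: hS => [[s0 hs0] [E0 [hE0 [E0S Ht1]]]].
case: (pselect (exists i, I i)) => [[i0 hi0]|hno]; last first.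
  exists (fun _ => 0); split.
    split; first by move=> E G _ _ _; rewrite addr0.
    by exists 0 => E _; rewrite normr0.
  by move=> [i hi]; exfalso; apply: hno; exists i.
have [P [[hPadd [MP hPM]] [hPi [d hd hdS]]]] := hU I hI S hS'.
have hD : 0 < P E0.
  rewrite (PE0 hT hE0 E0S Ht1 hi0 (hPi i0 hi0)).
  apply: lt_le_trans hd _; apply: hdS.
    exact: (HsubA hT (Bset_M hT hE0 E0S Ht1 hi0)).
  exact: (S_B Ht1 hi0).
exists (Qc A E0 P); split.
  split; first exact: (Qc_add hT hE0 E0S hPadd).
  by exists (`|(P E0)^-1| * MP) => G hG; apply: (Qc_bound hT hE0 E0S hPM).
move=> j _; exact: (Qc_Pi hT hE0 E0S Ht1 hs0 hPadd hPM hPi hD).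
Qed.

Theorem proposition4 (R : realType) (Omega N : Type) (A : set (set Omega))
  (M : N -> set (set Omega)) (t : N -> Omega -> set Omega -> R) :
  type_space A M t ->
  (univ_consistent A t <->
   (forall I : set N, finite_set I -> forall S : set Omega, cc_component A t I S ->
      consistent (restr_fam S A) (induced_t A S I t))).
Proof.
move=> hT; split; first exact: (dir_fwd hT).
exact: (dir_back hT).
Qed.
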